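(* Let $G$ be a connected graph on $n\ge2$ vertices, $\alpha\in\mathbb{R}$, with vertices labeled so that, writing $s_k=({}^\alpha\mathbb{M})_k+\mathbb{D}_k$, we have $s_1\ge s_2\ge\cdots\ge s_n$. Let $S=\min_{1\le i\le n}\mathbb{D}_i$ and $T=\min_{1\le i\ne j\le n}d_{ij}\mathbb{D}_j^\alpha/\mathbb{D}_i^\alpha$. Then \[\rho(\mathbb{DQ}(G))\ge \frac{s_n+S-T+\sqrt{(s_n-S+T)^2+4T\sum_{k=1}^{n-1}(s_k-s_n)}}{2}.\] Equality holds if and only if $s_1=\cdots=s_n$, or for some $2\le t\le n$: (i) $\mathbb{D}_k=S$ for $1\le k\le t-1$; (ii) $d_{kl}\mathbb{D}_l^\alpha/\mathbb{D}_k^\alpha=T$ for all $1\le k\le n$, $1\le l\le t-1$, $k\ne l$; (iii) $s_t=\cdots=s_n$.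
   Context: $\mathbb{D}(G)=(d_{ij})$ is the distance matrix of $G$, $\mathbb{D}_i=\sum_j d_{ij}$ the transmission of $v_i$, and $\mathbb{DQ}(G)=\mathrm{diag}(\mathbb{D}_1,\dots,\mathbb{D}_n)+\mathbb{D}(G)$ the distance signless Laplacian matrix. $({}^\alpha\mathbb{M})_i=\frac{\sum_{j=1}^n d_{ij}\mathbb{D}_j^\alpha}{\mathbb{D}_i^\alpha}$ is the generalized average transmission. $\rho$ is the spectral radius. *)

(* Defs.v *)
From Stdlib Require Import Reals Lra Lia List Arith Bool.
Import ListNotations.
Open Scope R_scope.

(* Vertices are 0 .. n-1; a simple graph is a boolean adjacency relation,
   symmetric and irreflexive on the vertex set. *)

Fixpoint reachb (adj : nat -> nat -> bool) (n k i j : nat) : bool :=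
  match k with
  | O => Nat.eqb i j
  | S k' => reachb adj n k' i j
            || existsb (fun m => adj i m && reachb adj n k' m j) (seq 0 n)
  end.

Definition connected (adj : nat -> nat -> bool) (n : nat) : Prop :=
  forall i j, (i < n)%nat -> (j < n)%nat -> exists k, reachb adj n k i j = true.

(* first k in start, start+1, ..., start+fuel-1 with f k = true, else start+fuel *)
Fixpoint first_true (f : nat -> bool) (fuel start : nat) : nat :=
  match fuel with
  | O => start
  | S fuel' => if f start then start else first_true f fuel' (S start)
  end.

(* graph distance d_ij: least length of a walk from i to j
   (in a connected graph on n vertices it is < n) *)
Definition dist (adj : nat -> nat -> bool) (n i j : nat) : nat :=
  first_true (fun k => reachb adj n k i j) n 0.

Fixpoint rsum (n : nat) (f : nat -> R) : R :=
  match n with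
  | O => 0
  | S n' => rsum n' f + f n'
  end.

Definition trans (adj : nat -> nat -> bool) (n i : nat) : R :=
  rsum n (fun j => INR (dist adj n i j)).

Definition wgt (adj : nat -> nat -> bool) (n : nat) (alpha : R) (i j : nat) : R :=
  INR (dist adj n i j) * Rpower (trans adj n j) alpha / Rpower (trans adj n i) alpha.

Definition gavg (adj : nat -> nat -> bool) (n : nat) (alpha : R) (i : nat) : R :=
  rsum n (fun j => wgt adj n alpha i j).

Definition sval (adj : nat -> nat -> bool) (n : nat) (alpha : R) (k : nat) : R :=
  gavg adj n alpha k + trans adj n k.

Definition minS (adj : nat -> nat -> bool) (n : nat) : R :=
  fold_right Rmin (trans adj n 0) (map (trans adj n) (seq 0 n)).

(* T = min_{i <> j} d_ij D_j^alpha / D_i^alpha  (n >= 2; default pair (0,1)) *)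
Definition minT (adj : nat -> nat -> bool) (n : nat) (alpha : R) : R :=
  fold_right Rmin (wgt adj n alpha 0 1)
    (map (fun p => wgt adj n alpha (fst p) (snd p))
       (filter (fun p => negb (Nat.eqb (fst p) (snd p)))
          (list_prod (seq 0 n) (seq 0 n)))).

Definition DQ (adj : nat -> nat -> bool) (n : nat) (i j : nat) : R :=
  (if Nat.eqb i j then trans adj n i else 0) + INR (dist adj n i j).

Definition is_eigenvalue (n : nat) (M : nat -> nat -> R) (lam : R) : Prop :=
  exists x : nat -> R,
    (exists i, (i < n)%nat /\ x i <> 0) /\
    forall i, (i < n)%nat -> rsum n (fun j => M i j * x j) = lam * x i.

(* r is the spectral radius of M (M real symmetric here, so all eigenvalues
   are real) *)
Definition is_spectral_radius (n : nat) (M : nat -> nat -> R) (r : R) : Prop :=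
  (exists lam, is_eigenvalue n M lam /\ Rabs lam = r) /\
  (forall lam, is_eigenvalue n M lam -> Rabs lam <= r).

(* Main.v *)
Set Warnings "-notation-overridden,-ambiguous-paths,-parsing,-coercions,-require-in-module".
Require Import Defs.
From Stdlib Require Import Reals Lra Lia List Classical Bool Arith Wf_nat.
Import ListNotations.
Module LA.
From mathcomp Require Import all_boot all_algebra.
From mathcomp Require Import Rstruct.
Import GRing.Theory.
Local Open Scope ring_scope.

Lemma rsum_big (n : nat) (f : nat -> R) : rsum n f = (\sum_(i < n) f i)%R.
Proof.
elim: n => [|n IH]; first by rewrite big_ord0.
by rewrite big_ord_recr /= IH.
Qed.

Lemma kernel_or_inverse (n : nat) (P : nat -> nat -> R) :
  (exists x : nat -> R, (exists i, (i < n)%coq_nat /\ x i <> 0%R) /\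
      forall i, (i < n)%coq_nat -> rsum n (fun j => (P i j * x j)%R) = 0%R) \/
  (exists N : nat -> nat -> R, forall (x : nat -> R) i, (i < n)%coq_nat ->
      x i = rsum n (fun j => (N i j * rsum n (fun k => P j k * x k))%R)).
Proof.
pose A : 'M[R]_n := \matrix_(i < n, j < n) P j i.
have [/eqP/det0P [v nzv vA] | nz] := eqVneq (\det A) 0%R.
- left. exists (fun j => if (j < n)%N =P true is ReflectT h then v ord0 (Ordinal h) else 0%R).
  split.
  + apply: NNPP => H; move/negP: nzv; apply; apply/eqP/matrixP => a b.
    rewrite [a]ord1 mxE.
    have hb := ltn_ord b.
    case: (boolP (v 0 b == 0%R)) => [/eqP -> //|hne]; exfalso; apply: H.
    exists (nat_of_ord b); split; first by apply/ltP.
    case: eqP => [h|]; last by rewrite hb.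
    rewrite (_ : Ordinal h = b); [exact/eqP | exact: ord_inj].
  + move=> i /ltP hi; rewrite rsum_big.
    have := congr1 (fun M : 'rV_n => M ord0 (Ordinal hi)) vA.
    rewrite !mxE => E; apply: etrans _ E; apply: eq_bigr => j _.
    rewrite mxE /=; case: eqP => [h|]; last by rewrite ltn_ord.
    rewrite (_ : Ordinal h = j); first by rewrite mulrC. by apply/val_inj.
- right.
  have uA : A \in unitmx by rewrite unitmxE unitfE.
  pose B := invmx A.
  exists (fun i j => if (i < n)%N =P true is ReflectT hi then
                       if (j < n)%N =P true is ReflectT hj then B (Ordinal hj) (Ordinal hi) else 0%R
                     else 0%R).
  move=> x i /ltP hi.
  pose xr : 'rV[R]_n := \row_(k < n) x k.
  have := mulmxK uA xr.
  move/(congr1 (fun M : 'rV_n => M ord0 (Ordinal hi))).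
  rewrite !mxE => <-.
  rewrite rsum_big; apply: eq_bigr => j _.
  case: eqP => [h|]; last by rewrite hi.
  case: eqP => [h'|]; last by rewrite ltn_ord.
  rewrite (_ : Ordinal h' = j); last by apply: ord_inj.
  rewrite (_ : Ordinal h = Ordinal hi); last by apply: ord_inj.
  rewrite mulrC; congr (_ * _)%R.
  rewrite mxE rsum_big; apply: eq_bigr => k _; rewrite !mxE mulrC //.
Qed.
End LA.
Open Scope R_scope.

Lemma rsum_ext n f g : (forall i, (i < n)%nat -> f i = g i) -> rsum n f = rsum n g.
Proof. induction n; simpl; intros H; auto. rewrite IHn by (intros; apply H; lia). rewrite H by lia. reflexivity. Qed.

Lemma rsum_plus n f g : rsum n (fun i => f i + g i) = rsum n f + rsum n g.
Proof. induction n; simpl; [lra|]. rewrite IHn. lra. Qed.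

Lemma rsum_minus n f g : rsum n (fun i => f i - g i) = rsum n f - rsum n g.
Proof. induction n; simpl; [lra|]. rewrite IHn. lra. Qed.

Lemma rsum_scal n c f : rsum n (fun i => c * f i) = c * rsum n f.
Proof. induction n; simpl; [lra|]. rewrite IHn. lra. Qed.

Lemma rsum_scalr n c f : rsum n (fun i => f i * c) = rsum n f * c.
Proof. induction n; simpl; [lra|]. rewrite IHn. lra. Qed.

Lemma rsum_zero n : rsum n (fun _ => 0) = 0.
Proof. induction n; simpl; [lra|]. rewrite IHn. lra. Qed.

Lemma rsum_le n f g : (forall i, (i < n)%nat -> f i <= g i) -> rsum n f <= rsum n g.
Proof. induction n; simpl; intros H; [lra|]. assert (f n <= g n) by (apply H; lia).
  assert (rsum n f <= rsum n g) by (apply IHn; intros; apply H; lia). lra. Qed.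

Lemma rsum_nonneg n f : (forall i, (i < n)%nat -> 0 <= f i) -> 0 <= rsum n f.
Proof. intros H. rewrite <- (rsum_zero n). apply rsum_le. auto. Qed.

Lemma rsum_term n f k : (forall i, (i < n)%nat -> 0 <= f i) -> (k < n)%nat -> f k <= rsum n f.
Proof. induction n; simpl; intros H Hk; [lia|].
  assert (0 <= rsum n f) by (apply rsum_nonneg; intros; apply H; lia).
  destruct (Nat.eq_dec k n) as [->|Hne].
  - lra.
  - assert (f k <= rsum n f) by (apply IHn; [intros; apply H; lia|lia]).
    assert (0 <= f n) by (apply H; lia). lra. Qed.

Lemma rsum_zero_inv n f : (forall i, (i < n)%nat -> 0 <= f i) -> rsum n f <= 0 ->
  forall k, (k < n)%nat -> f k = 0.
Proof. intros H Hs k Hk. assert (f k <= rsum n f) by (apply rsum_term; auto).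
  assert (0 <= f k) by auto. lra. Qed.

Lemma rsum_single n k f : (k < n)%nat -> rsum n (fun j => if Nat.eqb j k then f j else 0) = f k.
Proof. induction n; simpl; intros Hk; [lia|].
  destruct (Nat.eq_dec k n) as [->|Hne].
  - rewrite Nat.eqb_refl. rewrite (rsum_ext n _ (fun _ => 0)).
    + rewrite rsum_zero. lra.
    + intros i Hi. destruct (Nat.eqb_spec i n); [lia|auto].
  - rewrite IHn by lia. destruct (Nat.eqb_spec n k); [lia|]. lra. Qed.

Lemma rsum_swap n m f : rsum n (fun i => rsum m (fun j => f i j)) = rsum m (fun j => rsum n (fun i => f i j)).
Proof. induction n; simpl.
  - rewrite rsum_zero. reflexivity.
  - rewrite IHn. rewrite <- rsum_plus. reflexivity. Qed.

Lemma rsum_abs n f : Rabs (rsum n f) <= rsum n (fun i => Rabs (f i)).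
Proof. induction n; simpl. rewrite Rabs_R0; lra.
  eapply Rle_trans; [apply Rabs_triang|]. lra. Qed.

Definition mv n (Q : nat -> nat -> R) (x : nat -> R) i := rsum n (fun j => Q i j * x j).
Definition qf n Q x := rsum n (fun i => x i * mv n Q x i).
Definition nrm n (x : nat -> R) := rsum n (fun i => x i * x i).
Definition symm n (Q : nat -> nat -> R) := forall i j, (i < n)%nat -> (j < n)%nat -> Q i j = Q j i.

Lemma nrm_nonneg n x : 0 <= nrm n x.
Proof. apply rsum_nonneg. intros. nra. Qed.

Lemma sq_le_nrm n x k : (k < n)%nat -> x k * x k <= nrm n x.
Proof. intros. apply (rsum_term n (fun i => x i * x i)); auto. intros; nra. Qed.

Lemma nrm_zero n x : nrm n x <= 0 -> forall i, (i < n)%nat -> x i = 0.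
Proof. intros H i Hi. assert (x i * x i = 0).
  { apply (rsum_zero_inv n (fun i => x i * x i)); auto. intros; nra. } nra. Qed.

Lemma qf_zero n Q x : (forall i, (i < n)%nat -> x i = 0) -> qf n Q x = 0.
Proof. intros H. unfold qf. rewrite (rsum_ext n _ (fun _ => 0)). apply rsum_zero.
  intros i Hi. rewrite H by auto. lra. Qed.

Lemma qf_bound n Q x :
  qf n Q x <= rsum n (fun i => rsum n (fun j => Rabs (Q i j))) * nrm n x.
Proof.
  unfold qf, mv. rewrite <- rsum_scalr. apply rsum_le. intros i Hi.
  rewrite <- rsum_scal, <- rsum_scalr. apply rsum_le. intros j Hj.
  assert (Hi2 := sq_le_nrm n x i Hi). assert (Hj2 := sq_le_nrm n x j Hj).
  assert (Habs : Rabs (x i) * Rabs (x j) <= nrm n x).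
  { assert (0 <= (Rabs (x i) - Rabs (x j))^2) by apply pow2_ge_0.
    assert (Rabs (x i) * Rabs (x i) = x i * x i) by (rewrite <- Rabs_mult; apply Rabs_right; nra).
    assert (Rabs (x j) * Rabs (x j) = x j * x j) by (rewrite <- Rabs_mult; apply Rabs_right; nra).
    nra. }
  eapply Rle_trans; [apply Rle_abs|].
  rewrite !Rabs_mult.
  assert (0 <= Rabs (Q i j)) by apply Rabs_pos.
  assert (0 <= Rabs (x i)) by apply Rabs_pos.
  assert (0 <= Rabs (x j)) by apply Rabs_pos.
  nra.
Qed.

Definition ev (j k : nat) : R := if Nat.eqb k j then 1 else 0.

Lemma qf_expand n P x t j : symm n P -> (j < n)%nat ->
  qf n P (fun k => x k + t * ev j k) = qf n P x + 2 * t * mv n P x j + t * t * P j j.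
Proof.
  intros Hs Hj. unfold qf.
  rewrite (rsum_ext n _ (fun i => x i * mv n P x i + t * (P j i * x i)
        + t * (if Nat.eqb i j then mv n P x i else 0)
        + t * t * (if Nat.eqb i j then P i j else 0))).
  - rewrite !rsum_plus, !rsum_scal, !rsum_single by auto.
    unfold mv. lra.
  - intros i Hi.
    assert (Hm : mv n P (fun k => x k + t * ev j k) i = mv n P x i + t * P i j).
    { unfold mv. rewrite (rsum_ext n _ (fun k => P i k * x k + t * (if Nat.eqb k j then P i k else 0))).
      - rewrite rsum_plus, rsum_scal, rsum_single by auto. reflexivity.
      - intros k Hk. unfold ev. destruct (Nat.eqb k j); ring. }
    rewrite Hm. unfold ev. rewrite (Hs i j) by auto.
    destruct (Nat.eqb_spec i j).
    + subst. ring.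
    + ring.
Qed.

Lemma semi_cs n P x j : symm n P -> (forall z, 0 <= qf n P z) -> (j < n)%nat ->
  mv n P x j * mv n P x j <= P j j * qf n P x.
Proof.
  intros Hs Hp Hj.
  assert (Hd : 0 <= P j j).
  { pose proof (qf_expand n P (fun _ => 0) 1 j Hs Hj) as E.
    rewrite (qf_zero n P (fun _ => 0)) in E by auto.
    assert (mv n P (fun _ => 0) j = 0) as E2.
    { unfold mv. rewrite (rsum_ext n _ (fun _ => 0)). apply rsum_zero. intros; ring. }
    rewrite E2 in E. pose proof (Hp (fun k => 0 + 1 * ev j k)). lra. }
  set (y := mv n P x j). set (q := qf n P x). set (d := P j j).
  assert (Hf : forall t, 0 <= q + 2 * t * y + t * t * d).
  { intros t. unfold q, y, d. rewrite <- (qf_expand n P x t j Hs Hj). apply Hp. }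
  destruct (Rle_lt_or_eq_dec 0 d Hd) as [Hdp|Hd0].
  - pose proof (Hf (- y / d)) as H.
    replace (q + 2 * (- y / d) * y + - y / d * (- y / d) * d) with (q - y * y / d) in H
      by (field; lra).
    assert (y * y / d <= q) by lra.
    apply (Rmult_le_compat_l d) in H0; [|lra].
    replace (d * (y * y / d)) with (y * y) in H0 by (field; lra). lra.
  - rewrite <- Hd0. destruct (Req_dec y 0) as [Hy|Hy].
    + rewrite Hy. lra.
    + pose proof (Hf (- (q + 1) / (2 * y))) as H. rewrite <- Hd0 in H.
      replace (q + 2 * (- (q + 1) / (2 * y)) * y + - (q + 1) / (2 * y) * (- (q + 1) / (2 * y)) * 0)
        with (-1) in H by (field; auto). lra.
Qed.

Definition KI_prop := forall (n : nat) (P : nat -> nat -> R),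
  (exists x : nat -> R, (exists i, (i < n)%nat /\ x i <> 0) /\
      forall i, (i < n)%nat -> rsum n (fun j => P i j * x j) = 0) \/
  (exists N : nat -> nat -> R, forall (x : nat -> R) i, (i < n)%nat ->
      x i = rsum n (fun j => N i j * rsum n (fun k => P j k * x k))).

Lemma eig_max (KI : KI_prop) n Q u : symm n Q -> 0 < nrm n u ->
  exists m, (exists x, (exists i, (i < n)%nat /\ x i <> 0) /\
                 forall i, (i < n)%nat -> mv n Q x i = m * x i) /\
            forall x, qf n Q x <= m * nrm n x.
Proof.
  intros Hs Hu.
  set (E := fun r => exists x, 0 < nrm n x /\ r = qf n Q x / nrm n x).
  set (K := rsum n (fun i => rsum n (fun j => Rabs (Q i j)))).
  assert (HB : bound E).
  { exists K. intros r [x [Hx ->]]. apply Rmult_le_reg_r with (nrm n x); auto.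
    unfold Rdiv. rewrite Rmult_assoc, Rinv_l by lra. rewrite Rmult_1_r. apply qf_bound. }
  assert (HE : exists r, E r) by (exists (qf n Q u / nrm n u); exists u; auto).
  destruct (completeness E HB HE) as [m [Hub Hlub]].
  assert (H1 : forall x, qf n Q x <= m * nrm n x).
  { intros x. destruct (Rle_lt_or_eq_dec 0 (nrm n x) (nrm_nonneg n x)) as [Hp|H0].
    - assert (qf n Q x / nrm n x <= m) by (apply Hub; exists x; auto).
      apply Rmult_le_compat_r with (r := nrm n x) in H; [|lra].
      unfold Rdiv in H. rewrite Rmult_assoc, Rinv_l in H by lra. lra.
    - rewrite qf_zero. rewrite <- H0. lra. apply nrm_zero. lra. }
  assert (Happ : forall eps, 0 < eps -> exists x, 0 < nrm n x /\ m * nrm n x - qf n Q x < eps * nrm n x).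
  { intros eps He. apply NNPP. intros Hn.
    assert (is_upper_bound E (m - eps)).
    { intros r [x [Hx ->]]. apply NNPP. intros Hc. apply Hn. exists x. split; auto.
      assert (m - eps < qf n Q x / nrm n x) by lra.
      apply Rmult_lt_compat_r with (r := nrm n x) in H; auto.
      unfold Rdiv in H. rewrite Rmult_assoc, Rinv_l in H by lra. lra. }
    apply Hlub in H. lra. }
  exists m. split; [|exact H1].
  set (P := fun i j => (if Nat.eqb i j then m else 0) - Q i j).
  assert (HsP : symm n P).
  { intros i j Hi Hj. unfold P. rewrite Hs by auto. rewrite Nat.eqb_sym. reflexivity. }
  assert (HmvP : forall x i, (i < n)%nat -> mv n P x i = m * x i - mv n Q x i).
  { intros x i Hi. unfold mv, P.
    rewrite (rsum_ext n _ (fun j => (if Nat.eqb j i then m * x j else 0) - Q i j * x j)).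
    - rewrite rsum_minus, rsum_single by auto. reflexivity.
    - intros j Hj. rewrite Nat.eqb_sym. destruct (Nat.eqb j i); ring. }
  assert (HqP : forall x, qf n P x = m * nrm n x - qf n Q x).
  { intros x. unfold qf. rewrite (rsum_ext n _ (fun i => m * (x i * x i) - x i * mv n Q x i)).
    - rewrite rsum_minus, rsum_scal. reflexivity.
    - intros i Hi. rewrite HmvP by auto. ring. }
  assert (Hpsd : forall z, 0 <= qf n P z) by (intros z; rewrite HqP; specialize (H1 z); lra).
  destruct (KI n P) as [[x [Hx Hk]] | [N HN]].
  - exists x. split; auto. intros i Hi. specialize (Hk i Hi).
    change (mv n P x i = 0) in Hk. rewrite HmvP in Hk by auto. lra.
  - exfalso.
    set (Dm := rsum n (fun j => Rabs (P j j))).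
    set (A := fun i => rsum n (fun j => Rabs (N i j))).
    set (C := rsum n (fun i => A i * A i) * Dm + 1).
    assert (HDm : 0 <= Dm) by (apply rsum_nonneg; intros; apply Rabs_pos).
    assert (HAA : 0 <= rsum n (fun i => A i * A i)) by (apply rsum_nonneg; intros; nra).
    assert (HC : 1 <= C) by (unfold C; nra).
    assert (Hkey : forall x, nrm n x <= C * qf n P x).
    { intros x. set (q := qf n P x). assert (Hq : 0 <= q) by apply Hpsd.
      set (r := sqrt (Dm * q)).
      assert (Hr : 0 <= r) by apply sqrt_pos.
      assert (Hr2 : r * r = Dm * q) by (apply sqrt_sqrt; nra).
      assert (Hy : forall j, (j < n)%nat -> Rabs (mv n P x j) <= r).
      { intros j Hj. pose proof (semi_cs n P x j HsP Hpsd Hj) as Hcs.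
        assert (P j j <= Dm).
        { eapply Rle_trans; [apply Rle_abs|]. apply (rsum_term n (fun j => Rabs (P j j))); auto.
          intros; apply Rabs_pos. }
        assert (mv n P x j * mv n P x j <= Dm * q) by (fold q in Hcs; nra).
        unfold r. rewrite <- sqrt_Rsqr_abs. apply sqrt_le_1_alt. unfold Rsqr. lra. }
      assert (Hxi : forall i, (i < n)%nat -> x i * x i <= A i * A i * (Dm * q)).
      { intros i Hi. rewrite (HN x i Hi).
        set (s := rsum n (fun j => N i j * rsum n (fun k => P j k * x k))).
        assert (Hs1 : Rabs s <= A i * r).
        { unfold s. eapply Rle_trans; [apply rsum_abs|]. unfold A. rewrite <- rsum_scalr.
          apply rsum_le. intros j Hj. rewrite Rabs_mult. apply Rmult_le_compat_l; [apply Rabs_pos|].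
          apply Hy; auto. }
        assert (0 <= Rabs s) by apply Rabs_pos.
        assert (s * s = Rabs s * Rabs s) by (rewrite <- Rabs_mult; symmetry; apply Rabs_right; nra).
        nra. }
      unfold nrm. eapply Rle_trans.
      - apply rsum_le. exact Hxi.
      - rewrite rsum_scalr. unfold C. nra. }
    destruct (Happ (/ (2 * C))) as [x [Hx Hlt]].
    { apply Rinv_0_lt_compat. lra. }
    specialize (Hkey x). rewrite HqP in Hkey.
    assert (C * (m * nrm n x - qf n Q x) < C * (/ (2 * C) * nrm n x)) by (apply Rmult_lt_compat_l; lra).
    replace (C * (/ (2 * C) * nrm n x)) with (nrm n x / 2) in H by (field; lra).
    lra.
Qed.

Lemma existsb_seq f n : existsb f (seq 0 n) = true <-> exists m, (m < n)%nat /\ f m = true.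
Proof. rewrite existsb_exists. split.
  - intros [m [Hm Hf]]. apply in_seq in Hm. exists m. split; [lia|auto].
  - intros [m [Hm Hf]]. exists m. split; [apply in_seq; lia|auto]. Qed.

Section G.
Variable adj : nat -> nat -> bool.
Variable n : nat.
Hypothesis Hsym : forall i j, (i < n)%nat -> (j < n)%nat -> adj i j = adj j i.

Lemma reach_S k i j : reachb adj n (S k) i j = true <->
  reachb adj n k i j = true \/ exists m, (m < n)%nat /\ adj i m = true /\ reachb adj n k m j = true.
Proof. simpl. rewrite orb_true_iff, existsb_seq. split; intros [H|[m [Hm H]]]; auto.
  - right; exists m. rewrite andb_true_iff in H. tauto.
  - right; exists m. rewrite andb_true_iff. tauto. Qed.

Lemma reach_right k : forall i j, (i < n)%nat -> (j < n)%nat ->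
  (reachb adj n (S k) i j = true <->
  reachb adj n k i j = true \/ exists m, (m < n)%nat /\ reachb adj n k i m = true /\ adj m j = true).
Proof.
  induction k; intros i j Hi Hj.
  - rewrite reach_S. simpl. split.
    + intros [H|[m [Hm [Ha Hr]]]]; auto. apply Nat.eqb_eq in Hr. subst. right. exists i.
      rewrite Nat.eqb_refl. auto.
    + intros [H|[m [Hm [Hr Ha]]]]; auto. apply Nat.eqb_eq in Hr. subst. right. exists j.
      rewrite Nat.eqb_refl. auto.
  - rewrite reach_S. split.
    + intros [H|[m [Hm [Ha Hr]]]].
      * left; auto.
      * apply IHk in Hr; auto. destruct Hr as [Hr|[p [Hp [Hr Ha2]]]].
        -- left. apply reach_S. right. eauto.
        -- right. exists p. split; auto. split; auto. apply reach_S. right. eauto.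
    + intros [H|[p [Hp [Hr Ha]]]].
      * left; auto.
      * apply reach_S in Hr. destruct Hr as [Hr|[m [Hm [Ha2 Hr]]]].
        -- left. apply IHk; auto. right. eauto.
        -- right. exists m. split; auto. split; auto. apply IHk; auto. right. eauto.
Qed.

Lemma reach_sym k : forall i j, (i < n)%nat -> (j < n)%nat ->
  reachb adj n k i j = reachb adj n k j i.
Proof.
  induction k; intros i j Hi Hj.
  - simpl. apply Nat.eqb_sym.
  - apply eq_true_iff_eq. rewrite reach_S, (reach_right k j i Hj Hi). rewrite IHk by auto.
    split; intros [H|[m [Hm [H1 H2]]]]; auto; right; exists m; split; auto.
    + rewrite IHk, Hsym by auto. auto.
    + rewrite IHk in H1 by auto. rewrite Hsym in H2 by auto. auto.
Qed.

Lemma first_true_ext f g fuel start : (forall k, f k = g k) -> first_true f fuel start = first_true g fuel start.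
Proof. revert start. induction fuel; simpl; intros; auto. rewrite H, IHfuel; auto. Qed.

Lemma gdist_sym i j : (i < n)%nat -> (j < n)%nat -> Defs.dist adj n i j = Defs.dist adj n j i.
Proof. intros. unfold Defs.dist. apply first_true_ext. intros; apply reach_sym; auto. Qed.
End G.

Lemma first_true_ge f fuel start : (start <= first_true f fuel start)%nat.
Proof. revert start. induction fuel; simpl; intros; [lia|]. destruct (f start); [lia|].
  specialize (IHfuel (S start)). lia. Qed.

Lemma gdist_refl adj n i : (1 <= n)%nat -> Defs.dist adj n i i = 0%nat.
Proof. intros. unfold Defs.dist. destruct n; [lia|]. simpl. rewrite Nat.eqb_refl. reflexivity. Qed.

Lemma gdist_pos adj n i j : (1 <= n)%nat -> i <> j -> (1 <= Defs.dist adj n i j)%nat.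
Proof. intros. unfold Defs.dist. destruct n; [lia|]. simpl.
  destruct (Nat.eqb_spec i j); [lia|]. apply first_true_ge. Qed.

Lemma fold_min_le {A} (f : A -> R) d l x : In x l -> fold_right Rmin d (map f l) <= f x.
Proof. induction l; simpl; [tauto|]. intros [->|H].
  - apply Rmin_l.
  - eapply Rle_trans; [apply Rmin_r|]. auto. Qed.

Lemma fold_min_pos {A} (f : A -> R) d l : 0 < d -> (forall x, In x l -> 0 < f x) ->
  0 < fold_right Rmin d (map f l).
Proof. induction l; simpl; intros; auto. apply Rmin_glb_lt; auto. Qed.

Lemma max_index (f : nat -> R) n : (1 <= n)%nat -> exists i, (i < n)%nat /\ forall j, (j < n)%nat -> f j <= f i.
Proof. induction n; intros H; [lia|]. destruct (Nat.eq_dec n 0) as [->|Hn].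
  - exists 0%nat. split; [lia|]. intros j Hj. assert (j = 0%nat) by lia. subst; lra.
  - destruct IHn as [i [Hi Hm]]; [lia|]. destruct (Rle_dec (f n) (f i)).
    + exists i. split; [lia|]. intros j Hj. destruct (Nat.eq_dec j n); [subst; auto|]. apply Hm; lia.
    + exists n. split; [lia|]. intros j Hj. destruct (Nat.eq_dec j n); [subst; lra|].
      specialize (Hm j ltac:(lia)). lra. Qed.

Lemma least_index (P : nat -> Prop) N : P N -> exists t, (t <= N)%nat /\ P t /\ forall k, (k < t)%nat -> ~ P k.
Proof. induction N as [N IH] using lt_wf_ind. intros HP.
  destruct (classic (exists k, (k < N)%nat /\ P k)) as [[k [Hk Pk]]|Hno].
  - destruct (IH k Hk Pk) as [t [Ht [Pt Hl]]]. exists t. split; [lia|auto].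
  - exists N. split; [lia|]. split; auto. intros k Hk Pk. apply Hno. eauto. Qed.

Lemma Rpower_pos x a : 0 < Rpower x a.
Proof. unfold Rpower. apply exp_pos. Qed.

Lemma trans_nonneg adj n i : 0 <= trans adj n i.
Proof. unfold trans. apply rsum_nonneg. intros. apply pos_INR. Qed.

Lemma wgt_nonneg adj n a i j : 0 <= wgt adj n a i j.
Proof. unfold wgt. pose proof (Rpower_pos (trans adj n j) a). pose proof (Rpower_pos (trans adj n i) a).
  pose proof (pos_INR (Defs.dist adj n i j)). unfold Rdiv. apply Rmult_le_pos; [nra|].
  left; apply Rinv_0_lt_compat; auto. Qed.

Lemma wgt_mul adj n a i j : wgt adj n a i j * Rpower (trans adj n i) a =
  INR (Defs.dist adj n i j) * Rpower (trans adj n j) a.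
Proof. unfold wgt. pose proof (Rpower_pos (trans adj n i) a). field. lra. Qed.

Lemma wgt_diag adj n a i : (1 <= n)%nat -> wgt adj n a i i = 0.
Proof. intros. unfold wgt. rewrite gdist_refl by auto. simpl. lra. Qed.

Lemma wgt_pos adj n a i j : (1 <= n)%nat -> i <> j -> 0 < wgt adj n a i j.
Proof. intros. unfold wgt. pose proof (Rpower_pos (trans adj n j) a). pose proof (Rpower_pos (trans adj n i) a).
  pose proof (gdist_pos adj n i j H H0). apply le_INR in H3. simpl in H3.
  unfold Rdiv. apply Rmult_lt_0_compat; [nra|]. apply Rinv_0_lt_compat; auto. Qed.

Lemma minS_le adj n i : (i < n)%nat -> minS adj n <= trans adj n i.
Proof. intros. unfold minS. apply (fold_min_le (trans adj n)). apply in_seq. lia. Qed.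

Lemma minT_le adj n a i j : (i < n)%nat -> (j < n)%nat -> i <> j -> minT adj n a <= wgt adj n a i j.
Proof. intros. unfold minT. apply (fold_min_le (fun p => wgt adj n a (fst p) (snd p)) _ _ (i, j)).
  apply filter_In. split.
  - apply in_prod; apply in_seq; lia.
  - simpl. destruct (Nat.eqb_spec i j); auto. Qed.

Lemma minT_pos adj n a : (2 <= n)%nat -> 0 < minT adj n a.
Proof. intros. unfold minT. apply fold_min_pos.
  - apply wgt_pos; lia.
  - intros [i j] Hin. apply filter_In in Hin. destruct Hin as [_ Hne]. simpl in *.
    apply wgt_pos; [lia|]. destruct (Nat.eqb_spec i j); simpl in Hne; [discriminate|auto]. Qed.

Theorem theorem8_aux (KI : KI_prop) (n : nat) (adj : nat -> nat -> bool) (alpha rho : R) :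
  (2 <= n)%nat ->
  (forall i j, (i < n)%nat -> (j < n)%nat -> adj i j = adj j i) ->
  (forall i, (i < n)%nat -> adj i i = false) ->
  connected adj n ->
  (forall i j, (i <= j)%nat -> (j < n)%nat -> sval adj n alpha j <= sval adj n alpha i) ->
  is_spectral_radius n (DQ adj n) rho ->
  let s := sval adj n alpha in
  let S := minS adj n in
  let T := minT adj n alpha in
  let bound :=
    (s (n - 1)%nat + S - T
     + sqrt ((s (n - 1)%nat - S + T) ^ 2
             + 4 * T * rsum (n - 1) (fun k => s k - s (n - 1)%nat))) / 2 in
  rho >= bound /\
  (rho = bound <->
     ((forall k, (k < n)%nat -> s k = s 0%nat) \/
      (exists t, (1 <= t)%nat /\ (t <= n - 1)%nat /\
         (forall k, (k < t)%nat -> trans adj n k = S) /\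
         (forall k l, (k < n)%nat -> (l < t)%nat -> k <> l -> wgt adj n alpha k l = T) /\
         (forall k, (t <= k)%nat -> (k < n)%nat -> s k = s t)))).
Proof.
  intros Hn Hsym Hirr Hconn Hsort Hrho s S T bound.
  set (D := trans adj n).
  set (p := fun i => Rpower (D i) alpha).
  assert (Hp : forall i, 0 < p i) by (intros; apply Rpower_pos).
  assert (HT : 0 < T) by (apply minT_pos; auto).
  assert (HS : forall i, (i < n)%nat -> S <= D i) by (intros; apply minS_le; auto).
  assert (HTle : forall i j, (i < n)%nat -> (j < n)%nat -> i <> j -> T <= wgt adj n alpha i j)
    by (intros; apply minT_le; auto).
  set (a := s (n - 1)%nat).
  assert (HsD : forall i, D i <= s i).
  { intros i. unfold s, sval, gavg. fold (trans adj n i). fold D.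
    assert (0 <= rsum n (fun j => wgt adj n alpha i j)) by (apply rsum_nonneg; intros; apply wgt_nonneg). lra. }
  set (w := fun k => s k - a).
  assert (Hw : forall k, (k < n)%nat -> 0 <= w k).
  { intros k Hk. unfold w, a. pose proof (Hsort k (n-1)%nat ltac:(lia) ltac:(lia)). fold s in H. lra. }
  assert (Hwlast : w (n-1)%nat = 0) by (unfold w, a; lra).
  set (W := rsum (n - 1) (fun k => s k - a)).
  assert (HW : rsum n w = W).
  { unfold W. replace n with (Datatypes.S (n-1)) at 1 by lia. simpl. rewrite Hwlast. unfold w. lra. }
  assert (HW0 : 0 <= W) by (rewrite <- HW; apply rsum_nonneg; auto).
  set (X := (a - S + T) ^ 2 + 4 * T * W).
  assert (HX : 0 <= X) by (unfold X; pose proof (pow2_ge_0 (a - S + T)); nra).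
  set (r := sqrt X).
  assert (Hr : 0 <= r) by apply sqrt_pos.
  assert (Hr2 : r * r = X) by (apply sqrt_sqrt; auto).
  set (lam := (a + S - T + r) / 2).
  assert (Hbl : bound = lam) by reflexivity.
  assert (HaS : S <= a) by (pose proof (HS (n-1)%nat ltac:(lia)); pose proof (HsD (n-1)%nat); unfold a; lra).
  set (c := lam - S + T).
  assert (Hc : 0 < c) by (unfold c, lam; lra).
  assert (Hkey : (lam - a) * c = T * W).
  { unfold c, lam. replace ((a + S - T + r) / 2 - a) with ((r - (a - S + T)) / 2) by field.
    replace ((a + S - T + r) / 2 - S + T) with ((r + (a - S + T)) / 2) by field.
    assert (((r - (a - S + T)) / 2) * ((r + (a - S + T)) / 2) = (r * r - (a - S + T) ^ 2) / 4) by (field).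
    rewrite H, Hr2. unfold X. field. }
  set (v := fun k => 1 + w k / c).
  set (u := fun k => p k * v k).
  assert (Hv : forall k, (k < n)%nat -> 0 < v k).
  { intros k Hk. unfold v. pose proof (Hw k Hk). assert (0 <= w k / c) by (unfold Rdiv; apply Rmult_le_pos; [lra|left; apply Rinv_0_lt_compat; lra]). lra. }
  assert (Hu : forall k, (k < n)%nat -> 0 < u k) by (intros; unfold u; apply Rmult_lt_0_compat; auto).
  set (g := fun i j => wgt adj n alpha i j + (if Nat.eqb j i then T else 0) - T).
  assert (Hg : forall i j, (i < n)%nat -> (j < n)%nat -> 0 <= g i j).
  { intros i j Hi Hj. unfold g. destruct (Nat.eqb_spec j i).
    - subst. pose proof (wgt_nonneg adj n alpha i i). lra.
    - pose proof (HTle i j Hi Hj ltac:(auto)). lra. }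
  set (E := fun i => D i * v i + rsum n (fun j => wgt adj n alpha i j * v j) - lam * v i).
  assert (HcE : forall i, (i < n)%nat -> c * E i = (D i - S) * w i + rsum n (fun j => g i j * w j)).
  { intros i Hi.
    assert (H1 : rsum n (fun j => g i j * w j) = rsum n (fun j => wgt adj n alpha i j * w j) + T * w i - T * rsum n w).
    { rewrite (rsum_ext n _ (fun j => (wgt adj n alpha i j * w j + T * (if Nat.eqb j i then w j else 0)) - T * w j)).
      - rewrite rsum_minus, rsum_plus, rsum_scal, rsum_scal, rsum_single by auto. reflexivity.
      - intros j Hj. unfold g. destruct (Nat.eqb j i); ring. }
    assert (H2 : c * rsum n (fun j => wgt adj n alpha i j * v j) =
                 c * rsum n (fun j => wgt adj n alpha i j) + rsum n (fun j => wgt adj n alpha i j * w j)).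
    { rewrite <- !rsum_scal, <- rsum_plus. apply rsum_ext. intros j Hj. unfold v. field. lra. }
    assert (Hsi : s i = rsum n (fun j => wgt adj n alpha i j) + D i) by reflexivity.
    assert (Hcv : c * v i = c + w i) by (unfold v; field; lra).
    unfold E. rewrite H1, HW.
    replace (c * (D i * v i + rsum n (fun j => wgt adj n alpha i j * v j) - lam * v i))
      with (D i * (c * v i) + c * rsum n (fun j => wgt adj n alpha i j * v j) - lam * (c * v i)) by ring.
    rewrite H2, Hcv, <- Hkey. assert (Hwi : w i = rsum n (fun j => wgt adj n alpha i j) + D i - a) by (unfold w; rewrite Hsi; ring). rewrite !Hwi. unfold c. ring. }
  assert (HE : forall i, (i < n)%nat -> 0 <= E i).
  { intros i Hi. pose proof (HcE i Hi). pose proof (HS i Hi). pose proof (Hw i Hi).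
    assert (0 <= rsum n (fun j => g i j * w j)) by (apply rsum_nonneg; intros; apply Rmult_le_pos; auto).
    assert (0 <= c * E i) by nra. nra. }
  assert (HQu : forall i, (i < n)%nat -> mv n (DQ adj n) u i = lam * u i + p i * E i).
  { intros i Hi. unfold mv.
    rewrite (rsum_ext n _ (fun j => (if Nat.eqb j i then D i * u j else 0) + p i * (wgt adj n alpha i j * v j))).
    - rewrite rsum_plus, rsum_single, rsum_scal by auto. unfold E, u. ring.
    - intros j Hj. unfold DQ, u. rewrite Nat.eqb_sym. destruct (Nat.eqb_spec j i).
      + subst. rewrite gdist_refl, wgt_diag by lia. simpl. unfold D. ring.
      + pose proof (wgt_mul adj n alpha i j) as H.
        change (Rpower (trans adj n i) alpha) with (p i) in H.
        change (Rpower (trans adj n j) alpha) with (p j) in H.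
        replace ((0 + INR (Defs.dist adj n i j)) * (p j * v j)) with ((INR (Defs.dist adj n i j) * p j) * v j) by ring.
        rewrite <- H. ring. }
  assert (Hqf : qf n (DQ adj n) u = lam * nrm n u + rsum n (fun i => u i * (p i * E i))).
  { unfold qf, nrm. rewrite <- rsum_scal, <- rsum_plus. apply rsum_ext. intros i Hi.
    rewrite HQu by auto. ring. }
  assert (Hsum0 : 0 <= rsum n (fun i => u i * (p i * E i))).
  { apply rsum_nonneg. intros i Hi. pose proof (Hu i Hi). pose proof (Hp i). pose proof (HE i Hi).
    apply Rmult_le_pos; [lra|]. apply Rmult_le_pos; lra. }
  assert (Hsy : symm n (DQ adj n)).
  { intros i j Hi Hj. unfold DQ. rewrite (gdist_sym adj n Hsym i j Hi Hj). rewrite Nat.eqb_sym.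
    destruct (Nat.eqb_spec j i); [subst|]; reflexivity. }
  assert (Hnu : 0 < nrm n u).
  { pose proof (sq_le_nrm n u 0 ltac:(lia)). pose proof (Hu 0%nat ltac:(lia)). nra. }
  destruct (eig_max KI n (DQ adj n) u Hsy Hnu) as [m [[x [Hx Hxe]] Hmax]].
  assert (Hmev : is_eigenvalue n (DQ adj n) m) by (exists x; split; auto).
  destruct Hrho as [[mu [Hmu Hmur]] Hrmax].
  assert (Hml : lam <= m).
  { pose proof (Hmax u). rewrite Hqf in H. apply Rmult_le_reg_r with (nrm n u); auto. lra. }
  assert (Hrm : Rabs m <= rho) by (apply Hrmax; auto).
  pose proof (Rle_abs m).
  split; [rewrite Hbl; lra|].
  rewrite Hbl. split.
  -
    intros Heq.
    assert (Hle0 : rsum n (fun i => u i * (p i * E i)) <= 0).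
    { pose proof (Hmax u). rewrite Hqf in H0.
      assert (m * nrm n u <= lam * nrm n u) by (apply Rmult_le_compat_r; lra). lra. }
    assert (HE0 : forall i, (i < n)%nat -> E i = 0).
    { intros i Hi.
      assert (Hnn : forall j, (j < n)%nat -> 0 <= u j * (p j * E j)).
      { intros j Hj; pose proof (Hu j Hj); pose proof (Hp j);
         pose proof (HE j Hj); apply Rmult_le_pos; [lra|]; apply Rmult_le_pos; lra. }
      pose proof (rsum_zero_inv n (fun j => u j * (p j * E j)) Hnn Hle0 i Hi) as Hz.
      simpl in Hz. pose proof (Hu i Hi). pose proof (Hp i).
      apply Rmult_integral in Hz. destruct Hz as [Hz|Hz]; [lra|].
      apply Rmult_integral in Hz. destruct Hz as [Hz|Hz]; [lra|auto]. }
    assert (Hparts : forall i, (i < n)%nat -> (D i - S) * w i = 0 /\ forall j, (j < n)%nat -> g i j * w j = 0).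
    { intros i Hi. pose proof (HcE i Hi) as Hc0. rewrite HE0 in Hc0 by auto.
      pose proof (HS i Hi). pose proof (Hw i Hi).
      assert (0 <= (D i - S) * w i) by (apply Rmult_le_pos; lra).
      assert (0 <= rsum n (fun j => g i j * w j)) by (apply rsum_nonneg; intros; apply Rmult_le_pos; auto).
      split; [nra|]. intros j Hj.
      apply (rsum_zero_inv n (fun j => g i j * w j)); auto; [|lra].
      intros; apply Rmult_le_pos; auto. }
    destruct (Req_dec (w 0%nat) 0) as [Hw0|Hw0].
    + left. intros k Hk. pose proof (Hsort 0%nat k ltac:(lia) Hk) as Hs1. pose proof (Hw k Hk) as Hs2.
      fold s in Hs1. unfold w in *. lra.
    + right. destruct (least_index (fun k => w k = 0) (n-1)%nat Hwlast) as [t [Ht [Hwt Hlt]]].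
      assert (Ht1 : (1 <= t)%nat).
      { destruct t; [contradiction|lia]. }
      exists t. split; [auto|]. split; [auto|]. split; [|split].
      * intros k Hk. destruct (Hparts k ltac:(lia)) as [H1 _].
        apply Rmult_integral in H1. destruct H1 as [H1|H1]; [lra|].
        exfalso. exact (Hlt k Hk H1).
      * intros k l Hk Hl Hkl. destruct (Hparts k Hk) as [_ H1]. specialize (H1 l ltac:(lia)).
        apply Rmult_integral in H1. destruct H1 as [H1|H1].
        -- unfold g in H1. destruct (Nat.eqb_spec l k); [lia|]. lra.
        -- exfalso. exact (Hlt l Hl H1).
      * intros k Hk1 Hk2. pose proof (Hsort t k Hk1 Hk2) as Hs1. pose proof (Hw k Hk2) as Hs2. fold s in Hs1.
        unfold w in *. lra.
  - intros Hcond.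
    assert (HE0 : forall i, (i < n)%nat -> E i = 0).
    { intros i Hi. assert (c * E i = 0).
      { rewrite HcE by auto. destruct Hcond as [Hall|[t [Ht1 [Htn [HDt [HWt Hst]]]]]].
        - assert (Hw0 : forall k, (k < n)%nat -> w k = 0).
          { intros k Hk. unfold w, a. rewrite Hall, (Hall (n-1)%nat) by lia. ring. }
          rewrite Hw0 by auto. rewrite (rsum_ext n _ (fun _ => 0)); [rewrite rsum_zero; ring|].
          intros j Hj. rewrite Hw0 by auto. ring.
        - assert (Hw0 : forall k, (t <= k)%nat -> (k < n)%nat -> w k = 0).
          { intros k Hk1 Hk2. unfold w, a. rewrite Hst, (Hst (n-1)%nat) by lia. ring. }
          rewrite (rsum_ext n _ (fun _ => 0)).
          + rewrite rsum_zero. destruct (Nat.lt_ge_cases i t) as [Hit|Hit].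
            * rewrite (HDt i Hit). ring.
            * rewrite (Hw0 i Hit Hi). ring.
          + intros j Hj. destruct (Nat.lt_ge_cases j t) as [Hjt|Hjt].
            * unfold g. destruct (Nat.eqb_spec j i).
              -- subst. rewrite wgt_diag by lia. ring.
              -- rewrite (HWt i j Hi Hjt) by auto. ring.
            * rewrite (Hw0 j Hjt Hj). ring. }
      apply Rmult_integral in H0. destruct H0; [lra|auto]. }
    assert (HQu' : forall i, (i < n)%nat -> mv n (DQ adj n) u i = lam * u i).
    { intros i Hi. rewrite HQu, HE0 by auto. ring. }
    assert (HDQ : forall i j, 0 <= DQ adj n i j).
    { intros i j. unfold DQ. pose proof (trans_nonneg adj n i). pose proof (pos_INR (Defs.dist adj n i j)).
      destruct (Nat.eqb i j); lra. }
    destruct Hmu as [x' [[k0 [Hk0 Hx0]] Hx'e]].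
    set (y := fun k => Rabs (x' k) / u k).
    assert (Hyu : forall k, (k < n)%nat -> Rabs (x' k) = y k * u k).
    { intros k Hk. unfold y. field. pose proof (Hu k Hk). lra. }
    destruct (max_index y n ltac:(lia)) as [i0 [Hi0 Hymax]].
    assert (Hy0 : 0 < y k0).
    { unfold y. unfold Rdiv. apply Rmult_lt_0_compat. apply Rabs_pos_lt; auto.
      apply Rinv_0_lt_compat; auto. }
    pose proof (Hymax k0 Hk0).
    assert (Hxi0 : 0 < Rabs (x' i0)) by (rewrite Hyu by auto; pose proof (Hu i0 Hi0); nra).
    assert (Hmulam : Rabs mu * Rabs (x' i0) <= lam * Rabs (x' i0)).
    { rewrite <- Rabs_mult, <- (Hx'e i0 Hi0).
      eapply Rle_trans; [apply rsum_abs|].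
      apply Rle_trans with (rsum n (fun j => DQ adj n i0 j * (y i0 * u j))).
      - apply rsum_le. intros j Hj. rewrite Rabs_mult, Rabs_right by (apply Rle_ge; auto).
        rewrite Hyu by auto. apply Rmult_le_compat_l; auto. apply Rmult_le_compat_r; [pose proof (Hu j Hj); lra|].
        apply Hymax; auto.
      - rewrite (rsum_ext n _ (fun j => y i0 * (DQ adj n i0 j * u j))) by (intros; ring).
        rewrite rsum_scal. change (rsum n (fun j => DQ adj n i0 j * u j)) with (mv n (DQ adj n) u i0).
        rewrite HQu' by auto. rewrite (Hyu i0 Hi0). lra. }
    assert (Rabs mu <= lam) by (apply Rmult_le_reg_r with (Rabs (x' i0)); auto).
    lra.
Qed.

Lemma KI_holds : KI_prop.
Proof. intros n P. exact (LA.kernel_or_inverse n P). Qed.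

Theorem theorem8 (n : nat) (adj : nat -> nat -> bool) (alpha rho : R) :
  (2 <= n)%nat ->
  (forall i j, (i < n)%nat -> (j < n)%nat -> adj i j = adj j i) ->
  (forall i, (i < n)%nat -> adj i i = false) ->
  connected adj n ->
  (forall i j, (i <= j)%nat -> (j < n)%nat -> sval adj n alpha j <= sval adj n alpha i) ->
  is_spectral_radius n (DQ adj n) rho ->
  let s := sval adj n alpha in
  let S := minS adj n in
  let T := minT adj n alpha in
  let bound :=
    (s (n - 1)%nat + S - T
     + sqrt ((s (n - 1)%nat - S + T) ^ 2
             + 4 * T * rsum (n - 1) (fun k => s k - s (n - 1)%nat))) / 2 in
  rho >= bound /\
  (rho = bound <->
     ((forall k, (k < n)%nat -> s k = s 0%nat) \/
      (exists t, (1 <= t)%nat /\ (t <= n - 1)%nat /\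
         (forall k, (k < t)%nat -> trans adj n k = S) /\
         (forall k l, (k < n)%nat -> (l < t)%nat -> k <> l -> wgt adj n alpha k l = T) /\
         (forall k, (t <= k)%nat -> (k < n)%nat -> s k = s t)))).
Proof. exact (theorem8_aux KI_holds n adj alpha rho). Qed.
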